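(* Let $\Phi=(A;\{E_i\}_{i=0}^d;A^*;\{E^*_i\}_{i=0}^d)$ be a tridiagonal system on $V$ with $d\ge1$, such that $(A,A^* )$ satisfies the $q$-Serre relations, with $E_iV$ the eigenspace of $A$ for $\theta_i=q^{2i-d}$ and $E^*_iV$ the eigenspace of $A^*$ for $\theta^*_i=q^{d-2i}$. Let $\{U_i\}_{i=0}^d$ be its split decomposition, $K:V\to V$ the linear map acting on $U_i$ as $q^{d-2i}I$, $t$ a scalar, $B=A$ and $B^*=tA^*+(1-t)K$. Then $B$ and $B^*$ satisfy the $q$-Serre relations: $$B^3B^*-[3]_qB^2B^*B+[3]_qBB^*B^2-B^*B^3=0,\qquad B^{*3}B-[3]_qB^{*2}BB^*+[3]_qB^*BB^{*2}-BB^{*3}=0.$$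
   Context: $\mathcal K$ is an algebraically closed field; $V$ is a nonzero finite-dimensional vector space over $\mathcal K$; $q\in\mathcal K$ is nonzero and not a root of unity; $[3]_q=\frac{q^3-q^{-3}}{q-q^{-1}}=q^2+1+q^{-2}$. The $q$-Serre relations for $(X,Y)$: $X^3Y-[3]_qX^2YX+[3]_qXYX^2-YX^3=0$ and $Y^3X-[3]_qY^2XY+[3]_qYXY^2-XY^3=0$. Primitive idempotent of a diagonalizable $X$ for eigenvalue $\lambda_i$: $\prod_{j\ne i}\frac{X-\lambda_jI}{\lambda_i-\lambda_j}$. A tridiagonal system on $V$ is a sequence $(A;\{E_i\}_{i=0}^d;A^*;\{E^*_i\}_{i=0}^d)$ with $A,A^*$ diagonalizable, $\{E_i\}$, $\{E^*_i\}$ orderings of their primitive idempotents, $E_iA^*E_j=0$ and $E^*_iAE^*_j=0$ when $|i-j|>1$, and no subspaces other than $0,V$ invariant under both $A$ and $A^*$. Split decomposition: $U_i=(E^*_0V+\cdots+E^*_iV)\cap(E_iV+\cdots+E_dV)$; known: $V=U_0\oplus\cdots\oplus U_d$, $(A-\theta_iI)U_i\subseteq U_{i+1}$, $(A^*-\theta^*_iI)U_i\subseteq U_{i-1}$ ($U_{-1}=U_{d+1}=0$). *)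

(* Defs.v *)
From mathcomp Require Import all_boot all_order all_algebra.
Set Implicit Arguments. Unset Strict Implicit. Unset Printing Implicit Defensive.
Import GRing.Theory.
Local Open Scope ring_scope.

(* Convention: V = 'rV[F]_n (row vectors, n = dim V), a linear map is a matrix
   X : 'M_n acting by v |-> v *m X; the image X V of X is the row space of X. *)

Section TD.
Variables (F : fieldType) (n : nat).

Definition qint3 (q : F) : F := q ^+ 2 + 1 + q ^- 2.

Definition qSerre (q : F) (X Y : 'M[F]_n) : Prop :=
  X *m X *m X *m Y - qint3 q *: (X *m X *m Y *m X)
    + qint3 q *: (X *m Y *m X *m X) - Y *m X *m X *m X = 0 /\
  Y *m Y *m Y *m X - qint3 q *: (Y *m Y *m X *m Y)
    + qint3 q *: (Y *m X *m Y *m Y) - X *m Y *m Y *m Y = 0.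

Definition prim_idem (X : 'M[F]_n) (d : nat) (th : nat -> F) (i : nat)
  : 'M[F]_n :=
  \big[mulmx/1%:M]_(j < d.+1 | j != i :> nat)
    ((th i - th j)^-1 *: (X - (th j)%:M)).

Definition diag_with_eigenvalues (X : 'M[F]_n) (d : nat) (th : nat -> F)
  : Prop :=
  diagonalizable X /\
  (forall a : F, eigenvalue X a <-> exists2 i, (i <= d)%N & a = th i).

Definition tridiagonal_system (A As : 'M[F]_n) (d : nat) (th ths : nat -> F)
  : Prop :=
  [/\ diag_with_eigenvalues A d th,
      diag_with_eigenvalues As d ths,
      (forall i j, (i <= d)%N -> (j <= d)%N -> (j.+1 < i)%N || (i.+1 < j)%N ->
         prim_idem A d th i *m As *m prim_idem A d th j = 0),
      (forall i j, (i <= d)%N -> (j <= d)%N -> (j.+1 < i)%N || (i.+1 < j)%N ->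
         prim_idem As d ths i *m A *m prim_idem As d ths j = 0) &
      (forall W : 'M[F]_n, (W *m A <= W)%MS -> (W *m As <= W)%MS ->
         (W == (0 : 'M[F]_n))%MS || row_full W)].

Definition split_comp (A As : 'M[F]_n) (d : nat) (th ths : nat -> F) (i : nat)
  : 'M[F]_n :=
  ((\sum_(j < d.+1 | (j <= i)%N) prim_idem As d ths j)
     :&: (\sum_(j < d.+1 | (i <= j)%N) prim_idem A d th j))%MS.

End TD.

(* Main.v *)
Require Import Defs.
From mathcomp Require Import all_boot all_order all_algebra ring.
Set Implicit Arguments. Unset Strict Implicit. Unset Printing Implicit Defensive.
Import GRing.Theory.
Local Open Scope ring_scope.
Import Order.TTheory.

Lemma prod_eig (F : fieldType) (n : nat) (v : 'rV[F]_n) (I : Type) (r : seq I)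
  (P : pred I) (Fm : I -> 'M[F]_n) (f : I -> F) :
  (forall j, P j -> v *m Fm j = f j *: v) ->
  v *m \big[mulmx/1%:M]_(j <- r | P j) Fm j = (\prod_(j <- r | P j) f j) *: v.
Proof.
move=> H; elim/big_rec2: _ => [|j y1 y2 Pj IH]; first by rewrite mulmx1 scale1r.
by rewrite mulmxA H // -scalemxAl IH scalerA.
Qed.

Lemma prim_idem_eig (F : fieldType) (n : nat) (X : 'M[F]_n) d th m
   (v : 'rV[F]_n) (k : nat) :
  (forall i j, (i <= d)%N -> (j <= d)%N -> th i = th j -> i = j) ->
  (m <= d)%N -> v *m X = th m *: v ->
  v *m prim_idem X d th k = (if k == m then v else 0).
Proof.
move=> inj md vX; rewrite /prim_idem.
rewrite (@prod_eig _ _ _ _ _ _ _ (fun j : 'I_d.+1 => (th k - th j)^-1 * (th m - th j))); last first.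
  by move=> j _; rewrite -scalemxAr mulmxBr vX mul_mx_scalar -scalerBl scalerA.
case: eqP => [->|km].
  rewrite big1 ?scale1r // => j jm; rewrite mulVf // subr_eq0; apply/eqP => /inj.
  by move=> h; move: jm; rewrite h ?eqxx // -ltnS.
have mlt : (m < d.+1)%N by [].
rewrite (bigD1 (Ordinal mlt)) /=; last by apply/eqP => h; apply: km.
by rewrite subrr mulr0 mul0r scale0r.
Qed.

Lemma diag_ext (F : fieldType) (n : nat) (X : 'M[F]_n) d th (M N : 'M[F]_n) :
  diag_with_eigenvalues X d th ->
  (forall m (v : 'rV[F]_n), (m <= d)%N -> v *m X = th m *: v -> v *m M = v *m N) ->
  M = N.
Proof.
move=> [/diagonalizablePeigen [rs _ rsP] Hev] H.
have : (\sum_(r <- rs) eigenspace X r <= kermx (M - N))%MS.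
  elim/big_rec: _ => [|r S _ HS]; rewrite ?sub0mx // addsmx_sub HS andbT.
  apply/row_subP => i; set v := row i _.
  have vE : (v <= eigenspace X r)%MS by apply: row_sub.
  have [->|vn0] := eqVneq v 0; first by rewrite sub0mx.
  have /Hev [m md rE] : eigenvalue X r by apply/eigenvalueP; exists v => //; apply/eigenspaceP.
  by rewrite sub_kermx mulmxBr subr_eq0 (H m) // -rE; apply/eigenspaceP.
by rewrite rsP sub_kermx mul1mx subr_eq0 => /eqP.
Qed.

Definition Wsum (F : fieldType) (n : nat) (X : 'M[F]_n) d th (i : nat) :=
  (\sum_(j < d.+1 | (i <= j)%N) prim_idem X d th j)%MS.
Definition Wssum (F : fieldType) (n : nat) (X : 'M[F]_n) d th (i : nat) :=
  (\sum_(j < d.+1 | (j <= i)%N) prim_idem X d th j)%MS.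

Lemma sumE (F : fieldType) (n : nat) (X : 'M[F]_n) d th :
  diag_with_eigenvalues X d th ->
  (forall i j, (i <= d)%N -> (j <= d)%N -> th i = th j -> i = j) ->
  \sum_(k < d.+1) prim_idem X d th k = 1%:M.
Proof.
move=> dX inj; apply: (diag_ext dX) => m v md vX.
rewrite mulmx1 mulmx_sumr (bigD1 (Ordinal (md : (m < d.+1)%N))) //=.
rewrite (prim_idem_eig _ inj md vX) eqxx big1 ?addr0 // => k km.
rewrite (prim_idem_eig _ inj md vX); case: eqP => // h; move: km.
by rewrite (_ : k = Ordinal (md : (m < d.+1)%N)) ?eqxx //; apply: val_inj.
Qed.

Lemma EX (F : fieldType) (n : nat) (X : 'M[F]_n) d th (k : nat) :
  diag_with_eigenvalues X d th ->
  (forall i j, (i <= d)%N -> (j <= d)%N -> th i = th j -> i = j) ->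
  prim_idem X d th k *m X = th k *: prim_idem X d th k.
Proof.
move=> dX inj; apply: (diag_ext dX) => m v md vX.
rewrite mulmxA (prim_idem_eig _ inj md vX) -scalemxAr (prim_idem_eig _ inj md vX).
by case: eqP => [->|_]; rewrite ?vX ?mul0mx ?scaler0.
Qed.

Lemma G3 (F : fieldType) (n : nat) (X Y : 'M[F]_n) d th i :
  (forall a b, (a <= d)%N -> (b <= d)%N -> (b.+1 < a)%N || (a.+1 < b)%N ->
     prim_idem X d th a *m Y *m prim_idem X d th b = 0) ->
  \sum_(k < d.+1) prim_idem X d th k = 1%:M ->
  (Wssum X d th i *m Y <= Wssum X d th i.+1)%MS.
Proof.
move=> tri sE; rewrite /Wssum sumsmxMr; apply/sumsmx_subP => j ji.
rewrite -[_ *m Y]mulmx1 -sE mulmx_sumr; apply: summx_sub => k _.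
case: (ltnP j.+1 k) => hk.
  by rewrite tri ?sub0mx ?hk ?orbT //; [exact: (ltn_ord j) | exact: (ltn_ord k)].
apply: submx_trans (submxMl _ _) _; apply: (sumsmx_sup k) => //.
by apply: (leq_trans hk); rewrite ltnS.
Qed.

Lemma G4 (F : fieldType) (n : nat) (X Y : 'M[F]_n) d th i :
  (forall a b, (a <= d)%N -> (b <= d)%N -> (b.+1 < a)%N || (a.+1 < b)%N ->
     prim_idem X d th a *m Y *m prim_idem X d th b = 0) ->
  \sum_(k < d.+1) prim_idem X d th k = 1%:M ->
  (Wsum X d th i.+1 *m Y <= Wsum X d th i)%MS.
Proof.
move=> tri sE; rewrite /Wsum sumsmxMr; apply/sumsmx_subP => j ij.
rewrite -[_ *m Y]mulmx1 -sE mulmx_sumr; apply: summx_sub => k _.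
case: (ltnP k.+1 j) => hk.
  by rewrite tri ?sub0mx ?hk //; [exact: (ltn_ord j) | exact: (ltn_ord k)].
apply: submx_trans (submxMl _ _) _; apply: (sumsmx_sup k) => //.
by rewrite -ltnS (leq_trans ij hk).
Qed.

Lemma G5 (F : fieldType) (n : nat) (X : 'M[F]_n) d th i :
  diag_with_eigenvalues X d th ->
  (forall i j, (i <= d)%N -> (j <= d)%N -> th i = th j -> i = j) ->
  (Wsum X d th i *m (X - (th i)%:M) <= Wsum X d th i.+1)%MS.
Proof.
move=> dX inj; rewrite /Wsum sumsmxMr; apply/sumsmx_subP => j ij.
rewrite mulmxBr (EX _ dX inj) mul_mx_scalar -scalerBl.
case: (eqVneq (j : nat) i) => [->|ji]; first by rewrite subrr scale0r sub0mx.
by rewrite scalemx_sub //; apply: (sumsmx_sup j) => //; rewrite ltn_neqAle eq_sym ji.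
Qed.

Lemma G6 (F : fieldType) (n : nat) (X : 'M[F]_n) d th i :
  diag_with_eigenvalues X d th ->
  (forall i j, (i <= d)%N -> (j <= d)%N -> th i = th j -> i = j) ->
  (Wssum X d th i *m (X - (th i)%:M) <= \sum_(j < d.+1 | (j < i)%N) prim_idem X d th j)%MS.
Proof.
move=> dX inj; rewrite /Wssum sumsmxMr; apply/sumsmx_subP => j ji.
rewrite mulmxBr (EX _ dX inj) mul_mx_scalar -scalerBl.
case: (eqVneq (j : nat) i) => [->|ji']; first by rewrite subrr scale0r sub0mx.
by rewrite scalemx_sub //; apply: (sumsmx_sup j) => //; rewrite ltn_neqAle ji'.
Qed.
Definition wt (F : fieldType) (n : nat) (K M : 'M[F]_n) (a : F) :=
  M *m K = a *: (K *m M).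

Lemma wt_mul (F : fieldType) (n : nat) (K M N : 'M[F]_n) a b :
  wt K M a -> wt K N b -> wt K (M *m N) (a * b).
Proof.
rewrite /wt => hM hN.
have -> : M *m N *m K = b *: (M *m K *m N) by rewrite -mulmxA hN -scalemxAr mulmxA.
by rewrite hM -scalemxAl scalerA mulrC !mulmxA.
Qed.

Lemma wt_eq (F : fieldType) (n : nat) (K M : 'M[F]_n) a b :
  a = b -> wt K M a -> wt K M b.
Proof. by move=> ->. Qed.

Lemma wt_add (F : fieldType) (n : nat) (K M N : 'M[F]_n) a :
  wt K M a -> wt K N a -> wt K (M + N) a.
Proof. by rewrite /wt => hM hN; rewrite mulmxDl hM hN mulmxDr scalerDr. Qed.

Lemma wt_opp (F : fieldType) (n : nat) (K M : 'M[F]_n) a :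
  wt K M a -> wt K (- M) a.
Proof. by rewrite /wt => hM; rewrite mulNmx hM mulmxN scalerN. Qed.

Lemma wt_scale (F : fieldType) (n : nat) (K M : 'M[F]_n) a b :
  wt K M a -> wt K (b *: M) a.
Proof. by rewrite /wt => hM; rewrite -scalemxAl hM -scalemxAr !scalerA mulrC. Qed.

Definition T (F : fieldType) (n : nat) (c : F) (Y1 Y2 Y3 X : 'M[F]_n) :=
  Y1 *m Y2 *m Y3 *m X - c *: (Y1 *m Y2 *m X *m Y3) + c *: (Y1 *m X *m Y2 *m Y3)
  - X *m Y1 *m Y2 *m Y3.

Definition S2 (F : fieldType) (n : nat) (c : F) (Y X : 'M[F]_n) :=
  Y *m Y *m Y *m X - c *: (Y *m Y *m X *m Y) + c *: (Y *m X *m Y *m Y) - X *m Y *m Y *m Y.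

Lemma T_expand (F : fieldType) (n : nat) (c t : F) (K R X : 'M[F]_n) :
  S2 c (K + t *: R) X =
  T c K K K X + t *: (T c R K K X + T c K R K X + T c K K R X)
  + t^+2 *: (T c R R K X + T c R K R X + T c K R R X) + t^+3 *: T c R R R X.
Proof.
rewrite /S2 /T /=.
rewrite !(mulmxDl, mulmxDr); do ![rewrite -scalemxAl | rewrite -scalemxAr].
apply/matrixP => i j; rewrite !mxE; ring.
Qed.

Lemma T_D (F : fieldType) (n : nat) (c : F) (Y1 Y2 Y3 X X' : 'M[F]_n) :
  T c Y1 Y2 Y3 (X + X') = T c Y1 Y2 Y3 X + T c Y1 Y2 Y3 X'.
Proof.
rewrite /T !(mulmxDl, mulmxDr) !scalerDr.
apply/matrixP => i j; rewrite !mxE; ring.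
Qed.
Lemma wt_T (F : fieldType) (n : nat) (c : F) (K Y1 Y2 Y3 X : 'M[F]_n) a1 a2 a3 b :
  wt K Y1 a1 -> wt K Y2 a2 -> wt K Y3 a3 -> wt K X b ->
  wt K (T c Y1 Y2 Y3 X) (a1 * a2 * a3 * b).
Proof.
move=> h1 h2 h3 h4; rewrite /T.
apply: wt_add; [apply: wt_add; [apply: wt_add|]|apply: wt_opp].
- exact: wt_mul (wt_mul (wt_mul h1 h2) h3) h4.
- apply: wt_opp; apply: wt_scale.
  by apply: wt_eq (wt_mul (wt_mul (wt_mul h1 h2) h4) h3); ring.
- apply: wt_scale.
  by apply: wt_eq (wt_mul (wt_mul (wt_mul h1 h4) h2) h3); ring.
- by apply: wt_eq (wt_mul (wt_mul (wt_mul h4 h1) h2) h3); ring.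
Qed.

Lemma mxZr (F : fieldType) (n : nat) (a : F) (M N : 'M[F]_n) :
  M *m (a *: N) = a *: (M *m N).
Proof. by rewrite scalemxAr. Qed.

Lemma sep2 (F : fieldType) (n : nat) (K M1 M2 : 'M[F]_n) a1 a2 :
  K \in unitmx -> a1 != a2 -> wt K M1 a1 -> wt K M2 a2 -> M1 + M2 = 0 ->
  M1 = 0 /\ M2 = 0.
Proof.
move=> Ku a12 h1 h2 hs.
have e2 : M2 = - M1 by apply/eqP; rewrite -addr_eq0 addrC hs.
have : (a1 - a2) *: (K *m M1) = 0.
  rewrite scalerBl -h1; move: h2; rewrite /wt e2 mulNmx mulmxN scalerN => /eqP.
  by rewrite eqr_opp => /eqP ->; rewrite subrr.
move/eqP; rewrite scalemx_eq0 subr_eq0 (negbTE a12) /= => /eqP hK.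
have hM1 : M1 = 0 by rewrite -(mulKmx Ku M1) hK mulmx0.
by rewrite e2 hM1 oppr0.
Qed.

Lemma sep3 (F : fieldType) (n : nat) (K M1 M2 M3 : 'M[F]_n) a1 a2 a3 :
  K \in unitmx -> a1 != a2 -> a1 != a3 -> a2 != a3 ->
  wt K M1 a1 -> wt K M2 a2 -> wt K M3 a3 -> M1 + M2 + M3 = 0 ->
  [/\ M1 = 0, M2 = 0 & M3 = 0].
Proof.
move=> Ku a12 a13 a23 h1 h2 h3 hs.
have hN : K *m ((a2 - a1) *: M2 + (a3 - a1) *: M3) = 0.
  have : (M1 + M2 + M3) *m K - a1 *: (K *m (M1 + M2 + M3)) = 0
    by rewrite hs mul0mx mulmx0 scaler0 subrr.
  rewrite !mulmxDl h1 h2 h3 !mulmxDr !mxZr => <-.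
  by apply/matrixP => i j; rewrite !mxE; ring.
have hN' : (a2 - a1) *: M2 + (a3 - a1) *: M3 = 0
  by rewrite -(mulKmx Ku (_ + _)) hN mulmx0.
have [/eqP h2' /eqP h3'] := sep2 Ku a23 (wt_scale (a2 - a1) h2) (wt_scale (a3 - a1) h3) hN'.
move: h2' h3'; rewrite !scalemx_eq0 !subr_eq0 (eq_sym a2 a1) (negbTE a12) (eq_sym a3 a1) (negbTE a13) /=.
move=> /eqP e2 /eqP e3; split => //.
by move: hs; rewrite e2 e3 !addr0.
Qed.

Lemma sep4 (F : fieldType) (n : nat) (K M1 M2 M3 M4 : 'M[F]_n) a1 a2 a3 a4 :
  K \in unitmx -> a1 != a2 -> a1 != a3 -> a1 != a4 -> a2 != a3 -> a2 != a4 -> a3 != a4 ->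
  wt K M1 a1 -> wt K M2 a2 -> wt K M3 a3 -> wt K M4 a4 -> M1 + M2 + M3 + M4 = 0 ->
  [/\ M1 = 0, M2 = 0, M3 = 0 & M4 = 0].
Proof.
move=> Ku a12 a13 a14 a23 a24 a34 h1 h2 h3 h4 hs.
have hN : K *m ((a2 - a1) *: M2 + (a3 - a1) *: M3 + (a4 - a1) *: M4) = 0.
  have : (M1 + M2 + M3 + M4) *m K - a1 *: (K *m (M1 + M2 + M3 + M4)) = 0
    by rewrite hs mul0mx mulmx0 scaler0 subrr.
  rewrite !mulmxDl h1 h2 h3 h4 !mulmxDr !mxZr => <-.
  by apply/matrixP => i j; rewrite !mxE; ring.
have hN' : (a2 - a1) *: M2 + (a3 - a1) *: M3 + (a4 - a1) *: M4 = 0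
  by rewrite -(mulKmx Ku (_ + _)) hN mulmx0.
have [/eqP h2' /eqP h3' /eqP h4'] := sep3 Ku a23 a24 a34 (wt_scale (a2 - a1) h2)
   (wt_scale (a3 - a1) h3) (wt_scale (a4 - a1) h4) hN'.
move: h2' h3' h4'; rewrite !scalemx_eq0 !subr_eq0 (eq_sym a2 a1) (negbTE a12) (eq_sym a3 a1) (negbTE a13).
rewrite (eq_sym a4 a1) (negbTE a14) /=.
move=> /eqP e2 /eqP e3 /eqP e4; split => //.
by move: hs; rewrite e2 e3 e4 !addr0.
Qed.
Lemma normal_forms (F : fieldType) (n : nat) (q : F) (K R A0 L : 'M[F]_n) :
  let c := q^+2 + 1 + q^-2 in
  q != 0 -> K *m A0 = 1%:M -> A0 *m K = 1%:M ->
  R *m K = q^+2 *: (K *m R) -> L *m K = q^-2 *: (K *m L) ->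
  [/\ T c K K K A0 = 0, T c K K K L = 0,
      T c R K K A0 + T c K R K A0 + T c K K R A0 = 0 &
      T c R R K A0 + T c R K R A0 + T c K R R A0 = 0].
Proof.
move=> c q0 KA AK RK LK.
have q2 : q^+2 != 0 by rewrite expf_neq0.
have KR : K *m R = q^-2 *: (R *m K) by rewrite RK scalerA mulVf // scale1r.
have KL : K *m L = q^+2 *: (L *m K) by rewrite LK scalerA divff // scale1r.
have AR : A0 *m R = q^+2 *: (R *m A0).
  transitivity (A0 *m (R *m K) *m A0); first by rewrite -!mulmxA KA mulmx1.
  by rewrite RK mxZr -scalemxAl mulmxA AK mul1mx.
have KAt : forall M : 'M[F]_n, K *m (A0 *m M) = M by move=> M; rewrite mulmxA KA mul1mx.
have AKt : forall M : 'M[F]_n, A0 *m (K *m M) = M by move=> M; rewrite mulmxA AK mul1mx.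
have KRt : forall M : 'M[F]_n, K *m (R *m M) = q^-2 *: (R *m (K *m M))
  by move=> M; rewrite mulmxA KR -scalemxAl -mulmxA.
have KLt : forall M : 'M[F]_n, K *m (L *m M) = q^+2 *: (L *m (K *m M))
  by move=> M; rewrite mulmxA KL -scalemxAl -mulmxA.
have ARt : forall M : 'M[F]_n, A0 *m (R *m M) = q^+2 *: (R *m (A0 *m M))
  by move=> M; rewrite mulmxA AR -scalemxAl -mulmxA.
rewrite /T; split; rewrite -!mulmxA;
rewrite ?(KAt, AKt, KRt, KLt, ARt, KA, AK, KR, KL, AR, mxZr, scalerA, mul1mx, mulmx1, scale1r);
apply/matrixP => i j; rewrite !mxE /c; set s := bigop _ _ _; by field.
Qed.
Definition S1 (F : fieldType) (n : nat) (c : F) (X Y : 'M[F]_n) :=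
  X *m X *m X *m Y - c *: (X *m X *m Y *m X) + c *: (X *m Y *m X *m X) - Y *m X *m X *m X.

Lemma S1_lin (F : fieldType) (n : nat) (c a b : F) (X Y Z : 'M[F]_n) :
  S1 c X (a *: Y + b *: Z) = a *: S1 c X Y + b *: S1 c X Z.
Proof.
rewrite /S1 !(mulmxDl, mulmxDr); do ![rewrite -scalemxAl | rewrite -scalemxAr].
apply/matrixP => i j; rewrite !mxE; ring.
Qed.

Lemma alg_first (F : fieldType) (n : nat) (q : F) (K A : 'M[F]_n) :
  q != 0 -> A *m K = q^-2 *: (K *m A) + (1 - q^-2) *: 1%:M ->
  S1 (q^+2 + 1 + q^-2) A K = 0.
Proof.
rewrite /S1; set c := q^+2 + 1 + q^-2; move=> q0 AK.
have AKt : forall M : 'M[F]_n, A *m (K *m M) = q^-2 *: (K *m (A *m M)) + (1 - q^-2) *: M.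
  by move=> M; rewrite mulmxA AK mulmxDl -!scalemxAl mul1mx mulmxA.
rewrite -!mulmxA.
rewrite ?(AKt, AK, mulmxDr, mxZr, scalerDr, scalerA, mulmx1).
move: (K *m (A *m (A *m A))) (A *m A) => P Q.
apply/matrixP => i j; rewrite !mxE /c; by field.
Qed.

Lemma rg1 (F : fieldType) (n : nat) (a a' b b' c c' d d' e e' f f' g g' h h' : 'M[F]_n) :
  a + a' + ((b + b') + (c + c') + (d + d')) + ((e + e') + (f + f') + (g + g'))
    + (h + h') = 0 ->
  a = 0 -> a' = 0 -> b + c + d = 0 -> e + f + g = 0 ->
  h + h' + (e' + f' + g') + (b' + c' + d') = 0.
Proof.
move=> H za za' zb ze.
have -> : h + h' + (e' + f' + g') + (b' + c' + d') =
  (a + a' + ((b + b') + (c + c') + (d + d')) + ((e + e') + (f + f') + (g + g'))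
    + (h + h')) - (a + a' + (b + c + d) + (e + f + g)).
  by apply/matrixP => i j; rewrite !mxE; ring.
by rewrite H za za' zb ze !addr0 subrr.
Qed.

Lemma rg2 (F : fieldType) (n : nat) (t : F) (a a' b b' c c' d d' e e' f f' g g' h h' : 'M[F]_n) :
  a = 0 -> a' = 0 -> b + c + d = 0 -> b' + c' + d' = 0 -> e + f + g = 0 ->
  e' + f' + g' = 0 -> h = 0 -> h' = 0 ->
  a + a' + t *: ((b + b') + (c + c') + (d + d'))
  + t^+2 *: ((e + e') + (f + f') + (g + g')) + t^+3 *: (h + h') = 0.
Proof.
move=> za za' zb zb' ze ze' zh zh'.
have -> : a + a' + t *: ((b + b') + (c + c') + (d + d'))
  + t^+2 *: ((e + e') + (f + f') + (g + g')) + t^+3 *: (h + h') =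
  a + a' + t *: ((b + c + d) + (b' + c' + d'))
  + t^+2 *: ((e + f + g) + (e' + f' + g')) + t^+3 *: (h + h').
  by apply/matrixP => i j; rewrite !mxE; ring.
by rewrite za za' zb zb' ze ze' zh zh' !addr0 !scaler0 !addr0.
Qed.

Lemma pow_neq (F : fieldType) (q : F) a b :
  q != 0 -> q^+b != 1 -> q^+a != q^+(a + b).
Proof.
move=> q0 qb; rewrite exprD; apply/eqP => h.
have : q^+a * (q^+b - 1) = 0 by rewrite mulrBr mulr1 -h subrr.
move/eqP; rewrite mulf_eq0 expf_eq0 (negbTE q0) andbF /= subr_eq0.
by rewrite (negbTE qb).
Qed.

Lemma alg_main (F : fieldType) (n : nat) (q t : F) (K R A0 L : 'M[F]_n) :
  q != 0 -> q^+2 != 1 -> q^+4 != 1 -> q^+6 != 1 ->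
  K \in unitmx -> K *m A0 = 1%:M -> A0 *m K = 1%:M ->
  R *m K = q^+2 *: (K *m R) -> L *m K = q^-2 *: (K *m L) ->
  S2 (q^+2 + 1 + q^-2) (K + R) (A0 + L) = 0 ->
  S2 (q^+2 + 1 + q^-2) (K + t *: R) (A0 + L) = 0.
Proof.
set c := q^+2 + 1 + q^-2; move=> q0 q2 q4 q6 Ku KA AK RK LK H.
have [z0a z0l z1a z2a] := normal_forms q0 KA AK RK LK.
have H1 := T_expand c 1 K R (A0 + L).
rewrite !expr1n !scale1r in H1.
rewrite H1 !T_D in H.
have E := rg1 H z0a z0l z1a z2a.
have wK : wt K K 1 by rewrite /wt scale1r.
have wR : wt K R (q^+2) by [].
have wL : wt K L (q^-2) by [].
have wA : wt K A0 1 by rewrite /wt scale1r KA AK.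
have wT : forall (Y1 Y2 Y3 X : 'M[F]_n) a1 a2 a3 b w,
  wt K Y1 a1 -> wt K Y2 a2 -> wt K Y3 a3 -> wt K X b -> a1 * a2 * a3 * b = w ->
  wt K (T c Y1 Y2 Y3 X) w.
  by move=> Y1 Y2 Y3 X a1 a2 a3 b w h1 h2 h3 h4 e; rewrite -e; apply: wt_T.
have w1 : wt K (T c R R R A0) (q^+6) by apply: (wT _ _ _ _ _ _ _ _ _ wR wR wR wA); rewrite mulr1 -!exprD.
have w2 : wt K (T c R R R L) (q^+4) by apply: (wT _ _ _ _ _ _ _ _ _ wR wR wR wL); field.
have w3 : wt K (T c R R K L + T c R K R L + T c K R R L) (q^+2).
  apply: wt_add; [apply: wt_add|].
  - by apply: (wT _ _ _ _ _ _ _ _ _ wR wR wK wL); field.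
  - by apply: (wT _ _ _ _ _ _ _ _ _ wR wK wR wL); field.
  - by apply: (wT _ _ _ _ _ _ _ _ _ wK wR wR wL); field.
have w4 : wt K (T c R K K L + T c K R K L + T c K K R L) 1.
  apply: wt_add; [apply: wt_add|].
  - by apply: (wT _ _ _ _ _ _ _ _ _ wR wK wK wL); field.
  - by apply: (wT _ _ _ _ _ _ _ _ _ wK wR wK wL); field.
  - by apply: (wT _ _ _ _ _ _ _ _ _ wK wK wR wL); field.
have n42 := pow_neq 4 q0 q2.
have n24 := pow_neq 2 q0 q4.
have n06 := pow_neq 0 q0 q6.
have n22 := pow_neq 2 q0 q2.
have n04 := pow_neq 0 q0 q4.
have n02 := pow_neq 0 q0 q2.
rewrite expr0 in n06 n04 n02.
have a12 : q^+6 != q^+4 by rewrite eq_sym.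
have a13 : q^+6 != q^+2 by rewrite eq_sym.
have a14 : q^+6 != 1 by rewrite eq_sym.
have a23 : q^+4 != q^+2 by rewrite eq_sym.
have a24 : q^+4 != 1 by rewrite eq_sym.
have a34 : q^+2 != 1 by rewrite eq_sym.
have [h1 h2 h3 h4] := sep4 Ku a12 a13 a14 a23 a24 a34 w1 w2 w3 w4 E.
rewrite T_expand !T_D.
exact: rg2.
Qed.
Lemma thE (F : fieldType) (q : F) (d i : nat) : q != 0 ->
  q ^ (2 * (i : int) - (d : int)) = q ^+ (2 * i) / q ^+ d.
Proof.
move=> q0; rewrite expfzDr // exprnN exprnP; congr (_ * _); rewrite PoszM //.
Qed.
Lemma thsE (F : fieldType) (q : F) (d i : nat) : q != 0 ->
  q ^ ((d : int) - 2 * (i : int)) = q ^+ d / q ^+ (2 * i).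
Proof.
move=> q0; rewrite expfzDr // exprnN exprnP; congr (_ * _); rewrite PoszM //.
Qed.

Lemma pow2_inj (F : fieldType) (q : F) (i j : nat) :
  q != 0 -> (forall m : nat, (0 < m)%N -> q ^+ m != 1) ->
  q ^+ (2 * i) = q ^+ (2 * j) -> i = j.
Proof.
move=> q0 qp h; case: (ltngtP i j) => // hij; exfalso.
- have pp : (0 < 2 * (j - i))%N by rewrite muln_gt0 subn_gt0 hij.
  move: (pow_neq (2 * i)%N q0 (qp _ pp)).
  by rewrite -mulnDr (subnKC (ltnW hij)) h eqxx.
- have pp : (0 < 2 * (i - j))%N by rewrite muln_gt0 subn_gt0 hij.
  move: (pow_neq (2 * j)%N q0 (qp _ pp)).
  by rewrite -mulnDr (subnKC (ltnW hij)) h eqxx.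
Qed.

Theorem lemma7p12 (F : closedFieldType) (n : nat) (q : F)
  (A As K : 'M[F]_n) (d : nat) (t : F) :
  (0 < n)%N ->
  q != 0 ->
  (forall m : nat, (0 < m)%N -> q ^+ m != 1) ->
  (1 <= d)%N ->
  tridiagonal_system A As d (fun i => q ^ (2 * (i : int) - (d : int)))
                            (fun i => q ^ ((d : int) - 2 * (i : int))) ->
  qSerre q A As ->
  (forall i : nat, (i <= d)%N ->
     split_comp A As d (fun i => q ^ (2 * (i : int) - (d : int)))
                       (fun i => q ^ ((d : int) - 2 * (i : int))) i *m K
     = q ^ ((d : int) - 2 * (i : int)) *:
       split_comp A As d (fun i => q ^ (2 * (i : int) - (d : int)))
                         (fun i => q ^ ((d : int) - 2 * (i : int))) i) ->
  qSerre q A (t *: As + (1 - t) *: K).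
Proof.
move=> n0 q0 qp d1 [dA dAs triA triAs irr] [Ser1 Ser2] hK.
set th := (fun i : nat => q ^ (2 * (i : int) - (d : int))) in dA triA hK *.
set ths := (fun i : nat => q ^ ((d : int) - 2 * (i : int))) in dAs triAs hK *.
have thv : forall i, th i = q ^+ (2 * i) / q ^+ d by move=> i; rewrite /th thE.
have thsv : forall i, ths i = q ^+ d / q ^+ (2 * i) by move=> i; rewrite /ths thsE.
have qd : q ^+ d != 0 by rewrite expf_neq0.
have q2i : forall i, q ^+ (2 * i) != 0 by move=> i; rewrite expf_neq0.
have injth : forall i j, (i <= d)%N -> (j <= d)%N -> th i = th j -> i = j.
  move=> i j _ _; rewrite !thv => /(mulIf (invr_neq0 qd)) h.
  exact: pow2_inj q0 qp h.
have injths : forall i j, (i <= d)%N -> (j <= d)%N -> ths i = ths j -> i = j.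
  move=> i j _ _; rewrite !thsv => /(mulfI qd) /invr_inj h.
  exact: pow2_inj q0 qp h.
have ths0 : forall i, ths i != 0.
  by move=> i; rewrite thsv mulf_neq0 ?invr_neq0.
have thi : forall i, th i = (ths i)^-1.
  by move=> i; rewrite thv thsv invf_div.
have thsS : forall i, ths i.+1 = q^-2 * ths i.
  move=> i; rewrite !thsv mulnS exprD; field.
  by rewrite q2i q0.
have sEA := sumE dA injth.
have sEAs := sumE dAs injths.
pose U := split_comp A As d th ths.
have Ws_mono : forall i, (Wssum As d ths i <= Wssum As d ths i.+1)%MS.
  move=> i; apply/sumsmx_subP => j ji; apply: (sumsmx_sup j) => //.
  exact: leqW.
have W_mono : forall i, (Wsum A d th i.+1 <= Wsum A d th i)%MS.
  move=> i; apply/sumsmx_subP => j ji; apply: (sumsmx_sup j) => //.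
  exact: ltnW.
have UA : forall i, (U i *m (A - (th i)%:M) <= U i.+1)%MS.
  move=> i; rewrite sub_capmx; apply/andP; split.
  - apply: submx_trans (submxMr _ (capmxSl _ _)) _.
    rewrite mulmxBr; apply: addmx_sub; first exact: G3 triAs sEAs.
    by rewrite eqmx_opp mul_mx_scalar; apply: scalemx_sub; apply: Ws_mono.
  - apply: submx_trans (submxMr _ (capmxSr _ _)) _; exact: G5 dA injth.
have UAs : forall i, (U i.+1 *m (As - (ths i.+1)%:M) <= U i)%MS.
  move=> i; rewrite sub_capmx; apply/andP; split.
  - exact: submx_trans (submxMr _ (capmxSl _ _)) (G6 _ dAs injths).
  - apply: submx_trans (submxMr _ (capmxSr _ _)) _.
    rewrite mulmxBr; apply: addmx_sub; first exact: G4 triA sEA.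
    by rewrite eqmx_opp mul_mx_scalar; apply: scalemx_sub; apply: W_mono.
have UAs0 : U 0 *m (As - (ths 0)%:M) = 0.
  apply/eqP; rewrite -submx0.
  apply: submx_trans (submxMr _ (capmxSl _ _)) _.
  apply: submx_trans (G6 _ dAs injths) _.
  by apply/sumsmx_subP => j; rewrite ltn0.
have Ubig : forall i, (d < i)%N -> U i = 0.
  move=> i di; apply/eqP; rewrite -submx0; apply: submx_trans (capmxSr _ _) _.
  apply/sumsmx_subP => j ij; exfalso; move: (ltn_ord j); rewrite ltnS.
  by move=> /(leq_trans ij); rewrite leqNgt di.
pose S := (\sum_(i < d.+1) U i)%MS.
have US : forall i, (U i <= S)%MS.
  move=> i; case: (leqP i d) => [id | di].
    by apply: (sumsmx_sup (Ordinal (id : (i < d.+1)%N))).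
  by rewrite Ubig // sub0mx.
have SA : (S *m A <= S)%MS.
  rewrite sumsmxMr; apply/sumsmx_subP => i _.
  have -> : U i *m A = U i *m (A - (th i)%:M) + U i *m (th i)%:M
    by rewrite -mulmxDr subrK.
  by rewrite addmx_sub ?(submx_trans (UA i)) // mul_mx_scalar scalemx_sub.
have SAs : (S *m As <= S)%MS.
  rewrite sumsmxMr; apply/sumsmx_subP => i _.
  have -> : U i *m As = U i *m (As - (ths i)%:M) + U i *m (ths i)%:M
    by rewrite -mulmxDr subrK.
  rewrite addmx_sub // ?mul_mx_scalar ?scalemx_sub //.
  case: (nat_of_ord i) => [|j]; first by rewrite UAs0 sub0mx.
  exact: submx_trans (UAs j) (US j).
have [v vAs vn0] : exists2 v : 'rV_n, v *m As = ths 0 *: v & v != 0.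
  by apply/eigenvalueP; apply dAs.2; exists 0%N.
have vE := prim_idem_eig 0 injths (leq0n d) vAs.
rewrite eqxx in vE.
have E0U : (prim_idem As d ths 0 <= U 0)%MS.
  rewrite sub_capmx; apply/andP; split; first by apply: (sumsmx_sup ord0).
  apply: submx_trans (submx1 _) _; rewrite -sEA; apply: summx_sub => j _.
  by apply: (sumsmx_sup j).
have Sfull : row_full S.
  have := irr S SA SAs; case/orP => // /andP [S0 _]; exfalso.
  have E00 : prim_idem As d ths 0 = 0.
    apply/eqP; rewrite -submx0; apply: submx_trans E0U _.
    apply: submx_trans (US 0%N) _; exact: S0.
  by move: vE; rewrite E00 mulmx0 => v0; move: vn0; rewrite -v0 eqxx.
have ext : forall M N : 'M[F]_n, (forall i, (i <= d)%N -> U i *m M = U i *m N) -> M = N.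
  move=> M N h.
  have : (S <= kermx (M - N))%MS.
    apply/sumsmx_subP => i _; rewrite sub_kermx mulmxBr h ?subrr //.
    exact: (ltn_ord i).
  rewrite -sub1mx in Sfull; move/(submx_trans Sfull).
  by rewrite sub_kermx mul1mx subr_eq0 => /eqP.
have hK' : forall i, U i *m K = ths i *: U i.
  move=> i; case: (leqP i d) => [id | di]; first exact: hK.
  by rewrite Ubig // mul0mx scaler0.
have Kvec : forall i (M : 'M[F]_n), (M <= U i)%MS -> M *m K = ths i *: M.
  by move=> i M /submxP [X ->]; rewrite -mulmxA hK' mxZr.
have Ku : K \in unitmx.
  rewrite -row_full_unit -sub1mx; apply: submx_trans (_ : (1%:M <= S)%MS) _.
    by rewrite sub1mx.
  apply/sumsmx_subP => i _.
  have e : U i = (ths i)^-1 *: (U i *m K) by rewrite hK' scalerA mulVf ?scale1r.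
  by rewrite {1}e scalemx_sub // submxMl.
pose A0 := invmx K.
have KA : K *m A0 = 1%:M by exact: mulmxV.
have AK : A0 *m K = 1%:M by exact: mulVmx.
pose R := As - K.
pose L := A - A0.
have UR : forall i, U i *m R = U i *m (As - (ths i)%:M).
  by move=> i; rewrite /R !mulmxBr hK' mul_mx_scalar.
have UA0 : forall i, U i *m A0 = th i *: U i.
  move=> i; have := congr1 (mulmx^~ A0) (hK' i).
  rewrite -mulmxA KA mulmx1 -scalemxAl => h.
  by rewrite {2}h scalerA thi mulVf ?scale1r.
have UL : forall i, U i *m L = U i *m (A - (th i)%:M).
  by move=> i; rewrite /L !mulmxBr UA0 mul_mx_scalar.
have RK : R *m K = q^+2 *: (K *m R).
  apply: (ext) => i _.
  rewrite mulmxA -scalemxAr mulmxA hK' -scalemxAl scalerA UR.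
  case: i => [|j]; first by rewrite UAs0 mul0mx scaler0.
  by rewrite (Kvec j _ (UAs j)) thsS; congr (_ *: _); field.
have LK : L *m K = q^-2 *: (K *m L).
  apply: (ext) => i _.
  rewrite mulmxA -scalemxAr mulmxA hK' -scalemxAl scalerA UL.
  by rewrite (Kvec i.+1 _ (UA i)) thsS.
have AsE : As = K + R by rewrite /R addrC subrK.
have AE : A = A0 + L by rewrite /L addrC subrK.
clearbody R L A0.
have hAK : A *m K = q^-2 *: (K *m A) + (1 - q^-2) *: 1%:M.
  rewrite AE mulmxDl AK LK mulmxDr KA.
  move: (K *m L) => KL; apply/matrixP => ii jj; rewrite !mxE; ring; exact: q0.
split.
- change (S1 (qint3 q) A (t *: As + (1 - t) *: K) = 0).
  change (S1 (qint3 q) A As = 0) in Ser1.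
  by rewrite S1_lin Ser1 scaler0 add0r /qint3 (alg_first q0 hAK) scaler0.
- change (S2 (qint3 q) (t *: As + (1 - t) *: K) A = 0).
  change (S2 (qint3 q) As A = 0) in Ser2.
  have -> : t *: As + (1 - t) *: K = K + t *: R.
    rewrite AsE; apply/matrixP => ii jj; rewrite !mxE; ring.
  rewrite AsE AE /qint3 in Ser2 *.
  apply: alg_main => //; by [apply: qp | rewrite unitmxE].
Qed.
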